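(* Let $a\neq 0$ be a constant. Then there exists an analytic germ $u=u(t)$ at $t=0$ with $u(0)=a$ satisfying the differential equation $$t\,\Big(\frac{du}{dt}\Big)^2+u\,\frac{du}{dt}-\frac12=0 .$$ For any such $u$, define $$f(x,y)=\frac{x^3}{6}+y+x\,u(xy),\qquad g(x,y)=\frac{x^3}{6}+y-x\,u(xy),$$ and let $W_u$ be the planar 4-web whose foliations are the level sets of $x$, $y$, $f$, $g$. Then: (i) the cross-ratio of the four tangent lines to the foliations of $W_u$ is equal to $-1$ at every point (i.e. $\frac{\partial f}{\partial x}\frac{\partial g}{\partial y}+\frac{\partial g}{\partial x}\frac{\partial f}{\partial y}=0$); (ii) no 3-subweb of $W_u$ is hexagonal (the 3-subweb $(x,y,f)$ has nonzero Blaschke curvature at the origin); (iii) $W_u$ has the nontrivial abelian relation $\frac{x^3}{3}+2y-f-g\equiv 0$. Consequently $W_u$ is a Nakai web of rank exactly $1$. *)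

(* Defs.v *)
From Stdlib Require Import Reals.
From Coquelicot Require Import Coquelicot.
Open Scope R_scope.

Definition analytic_at (c : R) (phi : R -> R) : Prop :=
  exists r : R, 0 < r /\ exists a : nat -> R,
    forall t, Rabs (t - c) < r -> is_pseries a (t - c) (phi t).

Definition px (F : R -> R -> R) (x y : R) : R := Derive (fun s => F s y) x.
Definition py (F : R -> R -> R) (x y : R) : R := Derive (fun s => F x s) y.

(** Coefficient of dx/\dy in dF /\ dG. *)
Definition wedge (F G : R -> R -> R) (x y : R) : R :=
  px F x y * py G x y - py F x y * px G x y.

(** Blaschke curvature of the planar 3-web defined by the first integrals
    F1, F2, F3 (coefficient of dx/\dy of the curvature 2-form dγ).
    Normalization: ω1 = a1 dF1, ω2 = a2 dF2, ω3 = dF3 with ω1+ω2+ω3 = 0;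
    the connection form γ with dωi = γ /\ ωi is γ = h dF3, where
    da1 /\ dF1 = h a1 dF3 /\ dF1; the curvature is dγ = dh /\ dF3.
    (For the web (x, y, F) this equals ∂x∂y log(F_x / F_y).) *)
Definition bl_a1 (F1 F2 F3 : R -> R -> R) (x y : R) : R :=
  - wedge F3 F2 x y / wedge F1 F2 x y.
Definition bl_h (F1 F2 F3 : R -> R -> R) (x y : R) : R :=
  wedge (bl_a1 F1 F2 F3) F1 x y / (bl_a1 F1 F2 F3 x y * wedge F3 F1 x y).
Definition blaschke_curvature (F1 F2 F3 : R -> R -> R) (x y : R) : R :=
  wedge (bl_h F1 F2 F3) F3 x y.

Definition hexagonal_at0 (F1 F2 F3 : R -> R -> R) : Prop :=
  exists e : R, 0 < e /\ forall x y, Rabs x < e -> Rabs y < e ->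
    blaschke_curvature F1 F2 F3 x y = 0.

Definition abelian_relation (F1 F2 F3 F4 : R -> R -> R)
    (p1 p2 p3 p4 : R -> R) : Prop :=
  analytic_at (F1 0 0) p1 /\ analytic_at (F2 0 0) p2 /\
  analytic_at (F3 0 0) p3 /\ analytic_at (F4 0 0) p4 /\
  exists e : R, 0 < e /\ forall x y, Rabs x < e -> Rabs y < e ->
    p1 (F1 x y) + p2 (F2 x y) + p3 (F3 x y) + p4 (F4 x y) = 0.

Definition locally_const_at (c : R) (phi : R -> R) : Prop :=
  exists e : R, 0 < e /\ forall t, Rabs (t - c) < e -> phi t = phi c.

Definition trivial_relation (F1 F2 F3 F4 : R -> R -> R)
    (p1 p2 p3 p4 : R -> R) : Prop :=
  locally_const_at (F1 0 0) p1 /\ locally_const_at (F2 0 0) p2 /\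
  locally_const_at (F3 0 0) p3 /\ locally_const_at (F4 0 0) p4.

(** Rank of the 4-web = dimension of the space of abelian relations modulo
    the trivial (constant) ones. *)
Definition rank_exactly_one (F1 F2 F3 F4 : R -> R -> R) : Prop :=
  (exists p1 p2 p3 p4, abelian_relation F1 F2 F3 F4 p1 p2 p3 p4 /\
     ~ trivial_relation F1 F2 F3 F4 p1 p2 p3 p4) /\
  (forall p1 p2 p3 p4 q1 q2 q3 q4,
     abelian_relation F1 F2 F3 F4 p1 p2 p3 p4 ->
     abelian_relation F1 F2 F3 F4 q1 q2 q3 q4 ->
     exists l m : R, (l <> 0 \/ m <> 0) /\
       trivial_relation F1 F2 F3 F4
         (fun s => l * p1 s + m * q1 s) (fun s => l * p2 s + m * q2 s)
         (fun s => l * p3 s + m * q3 s) (fun s => l * p4 s + m * q4 s)).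

Definition solves_ode (u : R -> R) : Prop :=
  exists r : R, 0 < r /\ forall t, Rabs t < r ->
    t * (Derive u t) ^ 2 + u t * Derive u t - 1 / 2 = 0.

Definition Xc : R -> R -> R := fun x _ => x.
Definition Yc : R -> R -> R := fun _ y => y.
Definition fW (u : R -> R) : R -> R -> R :=
  fun x y => x ^ 3 / 6 + y + x * u (x * y).
Definition gW (u : R -> R) : R -> R -> R :=
  fun x y => x ^ 3 / 6 + y - x * u (x * y).

(* Main.v *)
Require Import Defs.
From Stdlib Require Import Reals Lra Lia FunctionalExtensionality.
From Coquelicot Require Import Coquelicot.
Open Scope R_scope.

Fixpoint dtab (a : R) (n : nat) : nat -> R :=
  match n with
  | O => fun _ => / (2 * a)
  | S m => fun k => if Nat.leb k m then dtab a m k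
           else - / a * sum_f_R0 (fun j => dtab a m j * dtab a m (m - j) * (1 + / INR (S j))) m
  end.
Definition dco a n := dtab a n n.

Lemma dtab_stable a n k : (k <= n)%nat -> dtab a n k = dco a k.
Proof.
  induction n; intros Hk.
  - assert (k = 0)%nat by lia; subst; reflexivity.
  - destruct (Nat.eq_dec k (S n)) as [->|Hne]; [reflexivity|].
    change (dtab a (S n) k) with (if Nat.leb k n then dtab a n k
           else - / a * sum_f_R0 (fun j => dtab a n j * dtab a n (n - j) * (1 + / INR (S j))) n).
    assert (Nat.leb k n = true) as -> by (apply Nat.leb_le; lia).
    apply IHn; lia.
Qed.

Lemma dco_0 a : dco a 0 = / (2 * a).
Proof. reflexivity. Qed.

Lemma dco_S a m : dco a (S m) =
  - / a * sum_f_R0 (fun j => dco a j * dco a (m - j) * (1 + / INR (S j))) m.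
Proof.
  unfold dco at 1.
  change (dtab a (S m) (S m)) with (if Nat.leb (S m) m then dtab a m (S m)
           else - / a * sum_f_R0 (fun j => dtab a m j * dtab a m (m - j) * (1 + / INR (S j))) m).
  assert (Nat.leb (S m) m = false) as -> by (apply Nat.leb_gt; lia).
  f_equal. apply sum_eq; intros i Hi.
  rewrite !dtab_stable by lia; reflexivity.
Qed.

Definition wt (n : nat) : R := / (INR (S n) * INR (S (S n))).

Lemma INR_S_pos n : 0 < INR (S n).
Proof. apply lt_0_INR; lia. Qed.

Lemma wt_pos n : 0 < wt n.
Proof. unfold wt. apply Rinv_0_lt_compat, Rmult_lt_0_compat; apply INR_S_pos. Qed.

Lemma wt_le1 n : wt n <= 1.
Proof.
  unfold wt. rewrite !S_INR. pose proof (pos_INR n).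
  rewrite <- Rinv_1. apply Rinv_le_contravar; nra.
Qed.

Lemma wt_pair i j : wt i * wt j <= 4 * wt (i + j + 1) * (wt i + wt j).
Proof.
  unfold wt. rewrite !S_INR, !plus_INR. simpl INR.
  pose proof (pos_INR i) as Hi. pose proof (pos_INR j) as Hj.
  set (I := INR i) in *. set (J := INR j) in *.
  assert (HA : 0 < (I+1)*(I+1+1)) by nra.
  assert (HB : 0 < (J+1)*(J+1+1)) by nra.
  assert (HN : 0 < (I+J+1+1)*(I+J+1+1+1)) by nra.
  set (A := (I+1)*(I+1+1)) in *. set (B := (J+1)*(J+1+1)) in *.
  set (N := (I+J+1+1)*(I+J+1+1+1)) in *.
  assert (HNAB : N <= 4 * (A + B)) by (unfold N, A, B; nra).
  apply Rminus_le_0.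
  replace (4 * / N * (/ A + / B) - / A * / B) with ((4 * (A + B) - N) / (N * A * B))
    by (field; lra).
  apply Rdiv_le_0_compat; [lra|].
  apply Rmult_lt_0_compat; [apply Rmult_lt_0_compat|]; lra.
Qed.

Lemma sum_wt n : sum_f_R0 wt n = 1 - / INR (S (S n)).
Proof.
  induction n.
  - unfold wt; simpl sum_f_R0. rewrite !S_INR. simpl INR. field.
  - simpl sum_f_R0 at 1. rewrite IHn. unfold wt.
    rewrite !S_INR. pose proof (pos_INR n).
    field. lra.
Qed.

Lemma sum_wt_le n : sum_f_R0 wt n <= 1.
Proof.
  rewrite sum_wt. pose proof (INR_S_pos (S n)).
  assert (0 < / INR (S (S n))) by (apply Rinv_0_lt_compat; lra). lra.
Qed.

Lemma conv_wt m : sum_f_R0 (fun j => wt j * wt (m - j)) m <= 8 * wt (S m).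
Proof.
  apply Rle_trans with (sum_f_R0 (fun j => 4 * wt (S m) * (wt j + wt (m - j))) m).
  - apply sum_Rle; intros j Hj.
    replace (S m) with (j + (m - j) + 1)%nat by lia. apply wt_pair.
  - rewrite (sum_eq _ (fun j => (wt j + wt (m - j)) * (4 * wt (S m))))
      by (intros; ring).
    rewrite <- scal_sum, sum_plus, (sum_f_R0_skip wt).
    pose proof (sum_wt_le m). pose proof (wt_pos (S m)). nra.
Qed.

Lemma dco_bound a (ha : a <> 0) n :
  Rabs (dco a n) <= / Rabs a * (16 / a ^ 2) ^ n * wt n.
Proof.
  assert (Ha : 0 < Rabs a) by (apply Rabs_pos_lt; auto).
  assert (Ha2 : a ^ 2 = Rabs a ^ 2) by (rewrite <- (pow2_abs a); reflexivity).
  set (M := / Rabs a). set (K := 16 / a ^ 2).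
  assert (HM : 0 < M) by (apply Rinv_0_lt_compat; auto).
  assert (HK : 0 < K) by (unfold K; rewrite Ha2; apply Rdiv_lt_0_compat; [lra| apply pow_lt; auto]).
  enough (forall n k, (k <= n)%nat -> Rabs (dco a k) <= M * K ^ k * wt k) by (apply (H n); lia).
  intro N; induction N; intros k Hk.
  - assert (k = 0)%nat by lia; subst. rewrite dco_0. unfold wt, M. simpl.
    rewrite Rabs_inv, Rabs_mult, Rabs_right by lra. right. field. lra.
  - destruct (Nat.eq_dec k (S N)) as [->|]; [|apply IHN; lia].
    rewrite dco_S, Rabs_mult, Rabs_Ropp, Rabs_inv. fold M.
    apply Rle_trans with (M * sum_f_R0 (fun j => 2 * M ^ 2 * K ^ N * (wt j * wt (N - j))) N).
    + apply Rmult_le_compat_l; [lra|].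
      eapply Rle_trans; [apply sum_f_R0_triangle|].
      apply sum_Rle; intros j Hj.
      rewrite !Rabs_mult.
      pose proof (IHN j ltac:(lia)) as H1. pose proof (IHN (N - j)%nat ltac:(lia)) as H2.
      assert (Hs : Rabs (1 + / INR (S j)) <= 2).
      { pose proof (INR_S_pos j). rewrite Rabs_right.
        - assert (/ INR (S j) <= 1).
          { rewrite <- Rinv_1. apply Rinv_le_contravar; [lra|]. rewrite S_INR. pose proof (pos_INR j); lra. }
          lra.
        - assert (0 < / INR (S j)) by (apply Rinv_0_lt_compat; lra). lra. }
      replace (2 * M ^ 2 * K ^ N * (wt j * wt (N - j))) with
        ((M * K ^ j * wt j) * (M * K ^ (N - j) * wt (N - j)) * 2).
      2:{ replace (K ^ N) with (K ^ j * K ^ (N - j)) by (rewrite <- pow_add; f_equal; lia). ring. }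
      apply Rmult_le_compat; try apply Rmult_le_pos; try apply Rabs_pos; auto.
      apply Rmult_le_compat; try apply Rabs_pos; auto.
    + rewrite <- (sum_eq (fun j => (wt j * wt (N - j)) * (2 * M ^ 2 * K ^ N)))
        by (intros; ring).
      rewrite <- scal_sum.
      pose proof (conv_wt N). pose proof (wt_pos (S N)).
      assert (0 < 2 * M ^ 2 * K ^ N) by (apply Rmult_lt_0_compat; [nra| apply pow_lt; auto]).
      apply Rle_trans with (M * (2 * M ^ 2 * K ^ N * (8 * wt (S N)))).
      * apply Rmult_le_compat_l; [lra|]. apply Rmult_le_compat_l; lra.
      * right. simpl pow. unfold K, M. rewrite Ha2. field. lra.
Qed.

Definition cco (a : R) (n : nat) : R :=
  match n with O => a | S m => dco a m / INR (S m) end.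

Lemma PS_derive_cco a n : PS_derive (cco a) n = dco a n.
Proof. unfold PS_derive, cco. pose proof (INR_S_pos n). field. lra. Qed.

Lemma CV_disk_dco a (ha : a <> 0) s : Rabs s < a ^ 2 / 16 -> CV_disk (dco a) s.
Proof.
  intros Hs. unfold CV_disk.
  assert (Ha : 0 < Rabs a) by (apply Rabs_pos_lt; auto).
  assert (Ha2 : 0 < a ^ 2) by (apply pow2_gt_0; auto).
  apply (@ex_series_le R_AbsRing R_CompleteNormedModule _ (fun n => / Rabs a * (16 / a ^ 2 * Rabs s) ^ n)).
  - intros n. change norm with Rabs. rewrite Rabs_Rabsolu, Rabs_mult, <- RPow_abs.
    rewrite Rpow_mult_distr, <- Rmult_assoc.
    apply Rmult_le_compat_r; [apply pow_le, Rabs_pos|].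
    eapply Rle_trans; [apply dco_bound; auto|].
    rewrite <- (Rmult_1_r (/ Rabs a * (16 / a ^ 2) ^ n)) at 2.
    apply Rmult_le_compat_l; [|apply wt_le1].
    apply Rmult_le_pos; [left; apply Rinv_0_lt_compat; auto| apply pow_le].
    left; apply Rdiv_lt_0_compat; lra.
  - apply (ex_series_ext (fun n => scal (/ Rabs a) ((16 / a ^ 2 * Rabs s) ^ n))); [reflexivity|].
    apply (@ex_series_scal_l R_AbsRing R_NormedModule). apply ex_series_geom.
    rewrite Rabs_right.
    + apply Rmult_lt_reg_l with (a ^ 2 / 16); [lra|].
      replace (a ^ 2 / 16 * (16 / a ^ 2 * Rabs s)) with (Rabs s) by (field; lra). lra.
    + apply Rle_ge, Rmult_le_pos; [left; apply Rdiv_lt_0_compat; lra| apply Rabs_pos].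
Qed.

Lemma CV_disk_radius a s : CV_disk a s -> Rbar_le (Finite s) (CV_radius a).
Proof. intros H. unfold CV_radius. destruct (Lub_Rbar_correct (CV_disk a)) as [H1 _]. apply H1, H. Qed.

Lemma radius_dco a (ha : a <> 0) t : Rabs t < a ^ 2 / 16 -> Rbar_lt (Rabs t) (CV_radius (dco a)).
Proof.
  intros Ht. set (s := (Rabs t + a ^ 2 / 16) / 2).
  assert (Hs : CV_disk (dco a) s).
  { apply CV_disk_dco; auto. unfold s. pose proof (Rabs_pos t).
    rewrite Rabs_right; lra. }
  apply CV_disk_radius in Hs.
  destruct (CV_radius (dco a)) as [r| |]; simpl in *; auto; unfold s in Hs; lra.
Qed.

Lemma radius_cco a (ha : a <> 0) t : Rabs t < a ^ 2 / 16 -> Rbar_lt (Rabs t) (CV_radius (cco a)).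
Proof.
  intros Ht. rewrite <- CV_radius_derive.
  rewrite (CV_radius_ext _ (dco a)) by apply PS_derive_cco.
  apply radius_dco; auto.
Qed.

Definition uu (a : R) : R -> R := PSeries (cco a).

Lemma uu_derive a (ha : a <> 0) t : Rabs t < a ^ 2 / 16 -> is_derive (uu a) t (PSeries (dco a) t).
Proof.
  intros Ht. unfold uu. rewrite <- (PSeries_ext _ _ t (PS_derive_cco a)).
  apply is_derive_PSeries, radius_cco; auto.
Qed.

Lemma coef_identity a (ha : a <> 0) n :
  PS_plus (PS_incr_1 (PS_mult (dco a) (dco a))) (PS_mult (cco a) (dco a)) (S n) = 0.
Proof.
  unfold PS_plus, PS_incr_1. change plus with Rplus.
  unfold PS_mult. rewrite (decomp_sum _ (S n)) by lia. simpl pred.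
  simpl (cco a 0). rewrite Nat.sub_0_r, dco_S.
  unfold cco.
  replace (sum_f_R0 (fun i => dco a i / INR (S i) * dco a (S n - S i)) n)
    with (sum_f_R0 (fun i => dco a i * dco a (n - i) * / INR (S i)) n)
    by (apply sum_eq; intros; simpl; unfold Rdiv; ring).
  replace (a * (- / a * sum_f_R0 (fun j => dco a j * dco a (n - j) * (1 + / INR (S j))) n))
    with (- sum_f_R0 (fun j => dco a j * dco a (n - j) * (1 + / INR (S j))) n) by (field; auto).
  rewrite (sum_eq (fun j => dco a j * dco a (n - j) * (1 + / INR (S j)))
     (fun j => dco a j * dco a (n - j) + dco a j * dco a (n - j) * / INR (S j)))
     by (intros; ring).
  rewrite sum_plus. set (s1 := sum_f_R0 _ n). set (s2 := sum_f_R0 _ n). change (@eq R (s1 + (-(s1+s2) + s2)) 0). ring.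
Qed.

Lemma uu_ode a (ha : a <> 0) t : Rabs t < a ^ 2 / 16 ->
  t * (Derive (uu a) t) ^ 2 + uu a t * Derive (uu a) t - 1 / 2 = 0.
Proof.
  intros Ht. rewrite (is_derive_unique _ _ _ (uu_derive a ha t Ht)).
  pose proof (radius_dco a ha t Ht) as Rd. pose proof (radius_cco a ha t Ht) as Rc.
  unfold uu. simpl pow. rewrite Rmult_1_r.
  rewrite <- !PSeries_mult by auto.
  rewrite <- PSeries_incr_1.
  rewrite <- PSeries_plus.
  2:{ apply ex_pseries_incr_1, ex_pseries_mult; auto. }
  2:{ apply ex_pseries_mult; auto. }
  rewrite PSeries_decr_1.
  2:{ apply ex_pseries_plus; [apply ex_pseries_incr_1|]; apply ex_pseries_mult; auto. }
  rewrite (PSeries_ext _ (fun _ => 0)).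
  2:{ intros n. unfold PS_decr_1. apply coef_identity; auto. }
  rewrite PSeries_const_0. unfold PS_plus, PS_incr_1, PS_mult. change plus with Rplus.
  simpl. rewrite dco_0. change zero with 0. field. auto.
Qed.

Lemma exists_sol a (ha : a <> 0) :
  exists u : R -> R, analytic_at 0 u /\ u 0 = a /\ solves_ode u.
Proof.
  assert (Hr : 0 < a ^ 2 / 16) by (apply Rdiv_lt_0_compat; [apply pow2_gt_0; auto| lra]).
  exists (uu a). split; [|split].
  - exists (a ^ 2 / 16). split; auto. exists (cco a). intros t Ht.
    rewrite Rminus_0_r in *. unfold uu. apply PSeries_correct, CV_radius_inside, radius_cco; auto.
  - unfold uu. rewrite PSeries_0. reflexivity.
  - exists (a ^ 2 / 16). split; auto. intros t Ht. apply uu_ode; auto.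
Qed.

Lemma loc_ball t r : Rabs t < r -> locally t (fun s => Rabs s < r).
Proof.
  intros Ht. assert (He : 0 < r - Rabs t) by lra.
  exists (mkposreal _ He). intros s Hs. simpl in Hs.
  change (Rabs (s - t) < r - Rabs t) in Hs.
  pose proof (Rabs_triang_inv s t). lra.
Qed.

Lemma radius_of_pseries (al : nat -> R) s : ex_pseries al s -> Rbar_le (Rabs s) (CV_radius al).
Proof.
  intros H. apply Rbar_not_lt_le. intros Hlt.
  apply (CV_disk_outside al s Hlt).
  apply ex_series_lim_0 in H.
  eapply is_lim_seq_ext; [|apply H]. intros n. simpl.
  change scal with Rmult. change mult with Rmult. rewrite pow_n_pow. ring.
Qed.

Lemma analytic_smooth p : analytic_at 0 p -> exists r, 0 < r /\ exists p1 p2 : R -> R,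
  forall t, Rabs t < r -> is_derive p t (p1 t) /\ is_derive p1 t (p2 t).
Proof.
  intros [r [Hr [al Hal]]].
  assert (Hp : forall t, Rabs t < r -> p t = PSeries al t).
  { intros t Ht. symmetry. apply is_pseries_unique. pose proof (Hal t) as H. rewrite Rminus_0_r in H. apply H; auto. }
  assert (Hrad : forall t, Rabs t < r -> Rbar_lt (Rabs t) (CV_radius al)).
  { intros t Ht. set (s := (Rabs t + r) / 2).
    assert (Hs : Rbar_le (Rabs s) (CV_radius al)).
    { apply radius_of_pseries. exists (p s). pose proof (Hal s) as H. rewrite Rminus_0_r in H. apply H.
      unfold s. pose proof (Rabs_pos t). rewrite Rabs_right; lra. }
    unfold s in Hs. pose proof (Rabs_pos t). rewrite (Rabs_right ((Rabs t + r)/2)) in Hs by lra.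
    destruct (CV_radius al) as [x| |]; simpl in *; auto; lra. }
  exists r; split; auto.
  exists (PSeries (PS_derive al)), (PSeries (PS_derive (PS_derive al))).
  intros t Ht; split.
  - apply (is_derive_ext_loc (PSeries al)).
    + apply (filter_imp (fun s => Rabs s < r)); [|apply loc_ball; auto].
      intros s Hs. symmetry. apply Hp; auto.
    + apply is_derive_PSeries; auto.
  - apply is_derive_PSeries. rewrite CV_radius_derive. auto.
Qed.

Definition smooth2 (u u1 u2 : R -> R) (r : R) :=
  forall t, Rabs t < r -> is_derive u t (u1 t) /\ is_derive u1 t (u2 t).

Lemma Dfun (f f1 : R -> R) t : is_derive f t (f1 t) -> Derive (fun z => f z) t = f1 t.
Proof. intros H. apply is_derive_unique. exact H. Qed.

Lemma sq_lt x y r : r <= 1 -> Rabs x < r -> Rabs y < r -> Rabs (x * y) < r.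
Proof.
  intros H1 Hx Hy. rewrite Rabs_mult. pose proof (Rabs_pos x). pose proof (Rabs_pos y). nra.
Qed.

Ltac Req := match goal with |- ?A = ?B => change (@eq R A B) end.
Ltac nz e := match goal with |- ?x <> 0 => replace x with e by (Req; field); auto end.

Ltac nz_all a :=
  repeat match goal with |- _ /\ _ => split end; try exact I;
  match goal with
  | |- ?x <> 0 =>
    first [ replace x with 1 by (Req; field; nz_all a); lra
          | replace x with (-1) by (Req; field; nz_all a); lra
          | replace x with a by (Req; field; nz_all a); assumption
          | replace x with (- a) by (Req; field; nz_all a); apply Ropp_neq_0_compat; assumption
          | replace x with (2 * a) by (Req; field; nz_all a); apply Rmult_integral_contrapositive_currified; [lra|assumption]
          | replace x with (- (2 * a)) by (Req; field; nz_all a); apply Ropp_neq_0_compat; apply Rmult_integral_contrapositive_currified; [lra|assumption]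
          | replace x with (- (2 * (a * a))) by (Req; field; nz_all a); apply Ropp_neq_0_compat; apply Rmult_integral_contrapositive_currified; [lra|apply Rmult_integral_contrapositive_currified; assumption]
          | replace x with (a * a) by (Req; field; nz_all a); apply Rmult_integral_contrapositive_currified; assumption
          | replace x with (4 * (a * a)) by (Req; field; nz_all a); apply Rmult_integral_contrapositive_currified; [lra|apply Rmult_integral_contrapositive_currified; assumption] ]
  end.

Lemma der_fx u u1 u2 r x y : smooth2 u u1 u2 r -> r <= 1 -> Rabs x < r -> Rabs y < r ->
  is_derive (fun s => fW u s y) x (x ^ 2 / 2 + u (x * y) + x * y * u1 (x * y)).
Proof.
  intros Hs Hr Hx Hy. pose proof (sq_lt x y r Hr Hx Hy) as Ht.
  destruct (Hs _ Ht) as [D0 D1].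
  unfold fW. auto_derive.
  - exists (u1 (x * y)). exact D0.
  - rewrite (Dfun _ _ _ D0). field.
Qed.

Lemma der_fy u u1 u2 r x y : smooth2 u u1 u2 r -> r <= 1 -> Rabs x < r -> Rabs y < r ->
  is_derive (fun s => fW u x s) y (1 + x ^ 2 * u1 (x * y)).
Proof.
  intros Hs Hr Hx Hy. pose proof (sq_lt x y r Hr Hx Hy) as Ht.
  destruct (Hs _ Ht) as [D0 D1].
  unfold fW. auto_derive.
  - exists (u1 (x * y)). exact D0.
  - rewrite (Dfun _ _ _ D0). field.
Qed.

Lemma der_gx u u1 u2 r x y : smooth2 u u1 u2 r -> r <= 1 -> Rabs x < r -> Rabs y < r ->
  is_derive (fun s => gW u s y) x (x ^ 2 / 2 - u (x * y) - x * y * u1 (x * y)).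
Proof.
  intros Hs Hr Hx Hy. pose proof (sq_lt x y r Hr Hx Hy) as Ht.
  destruct (Hs _ Ht) as [D0 D1].
  unfold gW. auto_derive.
  - exists (u1 (x * y)). exact D0.
  - rewrite (Dfun _ _ _ D0). field.
Qed.

Lemma der_gy u u1 u2 r x y : smooth2 u u1 u2 r -> r <= 1 -> Rabs x < r -> Rabs y < r ->
  is_derive (fun s => gW u x s) y (1 - x ^ 2 * u1 (x * y)).
Proof.
  intros Hs Hr Hx Hy. pose proof (sq_lt x y r Hr Hx Hy) as Ht.
  destruct (Hs _ Ht) as [D0 D1].
  unfold gW. auto_derive.
  - exists (u1 (x * y)). exact D0.
  - rewrite (Dfun _ _ _ D0). field.
Qed.

Lemma px_f u u1 u2 r x y : smooth2 u u1 u2 r -> r <= 1 -> Rabs x < r -> Rabs y < r ->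
  px (fW u) x y = x ^ 2 / 2 + u (x * y) + x * y * u1 (x * y).
Proof. intros. unfold px. apply is_derive_unique. apply (der_fx u u1 u2 r); auto. Qed.
Lemma py_f u u1 u2 r x y : smooth2 u u1 u2 r -> r <= 1 -> Rabs x < r -> Rabs y < r ->
  py (fW u) x y = 1 + x ^ 2 * u1 (x * y).
Proof. intros. unfold py. apply is_derive_unique. apply (der_fy u u1 u2 r); auto. Qed.
Lemma px_g u u1 u2 r x y : smooth2 u u1 u2 r -> r <= 1 -> Rabs x < r -> Rabs y < r ->
  px (gW u) x y = x ^ 2 / 2 - u (x * y) - x * y * u1 (x * y).
Proof. intros. unfold px. apply is_derive_unique. apply (der_gx u u1 u2 r); auto. Qed.
Lemma py_g u u1 u2 r x y : smooth2 u u1 u2 r -> r <= 1 -> Rabs x < r -> Rabs y < r ->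
  py (gW u) x y = 1 - x ^ 2 * u1 (x * y).
Proof. intros. unfold py. apply is_derive_unique. apply (der_gy u u1 u2 r); auto. Qed.

Lemma pxX x y : px Xc x y = 1.
Proof. unfold px, Xc. apply Derive_id. Qed.
Lemma pyX x y : py Xc x y = 0.
Proof. unfold py, Xc. apply Derive_const. Qed.
Lemma pxY x y : px Yc x y = 0.
Proof. unfold px, Yc. apply Derive_const. Qed.
Lemma pyY x y : py Yc x y = 1.
Proof. unfold py, Yc. apply Derive_id. Qed.


Lemma cross_ratio u u1 u2 r x y : smooth2 u u1 u2 r -> r <= 1 -> Rabs x < r -> Rabs y < r ->
  (x * y) * (u1 (x * y)) ^ 2 + u (x * y) * u1 (x * y) - 1 / 2 = 0 ->
  px (fW u) x y * py (gW u) x y + px (gW u) x y * py (fW u) x y = 0.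
Proof.
  intros Hs Hr Hx Hy Ho.
  rewrite (px_f u u1 u2 r), (py_f u u1 u2 r), (px_g u u1 u2 r), (py_g u u1 u2 r); auto.
  replace ((x ^ 2 / 2 + u (x * y) + x * y * u1 (x * y)) * (1 - x ^ 2 * u1 (x * y)) +
    (x ^ 2 / 2 - u (x * y) - x * y * u1 (x * y)) * (1 + x ^ 2 * u1 (x * y)))
  with (-2 * x ^ 2 * ((x * y) * (u1 (x * y)) ^ 2 + u (x * y) * u1 (x * y) - 1 / 2)) by field.
  rewrite Ho. ring.
Qed.



Lemma Derive_ext_ball (f g : R -> R) t r : Rabs t < r -> (forall s, Rabs s < r -> f s = g s) ->
  Derive f t = Derive g t.
Proof.
  intros Ht H. apply Derive_ext_loc.
  apply (filter_imp (fun s => Rabs s < r)); [|apply loc_ball; auto]. exact H.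
Qed.

Lemma curv_axes F1 F2 F3 R1 R2 r : 0 < r ->
  (forall s, Rabs s < r -> bl_h F1 F2 F3 s 0 = R1 s) ->
  (forall s, Rabs s < r -> bl_h F1 F2 F3 0 s = R2 s) ->
  blaschke_curvature F1 F2 F3 0 0 = Derive R1 0 * py F3 0 0 - Derive R2 0 * px F3 0 0.
Proof.
  intros Hr H1 H2. unfold blaschke_curvature. unfold wedge at 1.
  assert (H0 : Rabs 0 < r) by (rewrite Rabs_R0; auto).
  unfold px at 1, py at 2.
  rewrite (Derive_ext_ball (fun s => bl_h F1 F2 F3 s 0) R1 0 r H0 H1).
  rewrite (Derive_ext_ball (fun s => bl_h F1 F2 F3 0 s) R2 0 r H0 H2).
  reflexivity.
Qed.

Lemma bl_h_unfold F1 F2 F3 x y : bl_h F1 F2 F3 x y =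
  (px (bl_a1 F1 F2 F3) x y * py F1 x y - py (bl_a1 F1 F2 F3) x y * px F1 x y) /
  (bl_a1 F1 F2 F3 x y * (px F3 x y * py F1 x y - py F3 x y * px F1 x y)).
Proof. reflexivity. Qed.

Lemma Rdiv_eq2 n d n' d' : n = n' -> d = d' -> n / d = n' / d'.
Proof. intros -> ->. reflexivity. Qed.

Lemma abs0_lt r : 0 < r -> Rabs 0 < r.
Proof. rewrite Rabs_R0; auto. Qed.

Lemma abs_m0_lt s r : 0 < r -> Rabs (s * 0) < r.
Proof. rewrite Rmult_0_r, Rabs_R0; auto. Qed.
Lemma abs_0m_lt s r : 0 < r -> Rabs (0 * s) < r.
Proof. rewrite Rmult_0_l, Rabs_R0; auto. Qed.

Lemma a1_web1 u u1 u2 r x y : smooth2 u u1 u2 r -> r <= 1 -> Rabs x < r -> Rabs y < r ->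
  bl_a1 Xc Yc (fW u) x y = - (x ^ 2 / 2 + u (x * y) + x * y * u1 (x * y)).
Proof.
  intros. unfold bl_a1, wedge. rewrite (px_f u u1 u2 r), (py_f u u1 u2 r); auto.
  rewrite !pxX, !pyX, !pxY, !pyY. field.
Qed.

Lemma curv_web1 u u1 u2 r a : smooth2 u u1 u2 r -> 0 < r -> r <= 1 -> a <> 0 ->
  u 0 = a -> a * u1 0 = 1 / 2 -> blaschke_curvature Xc Yc (fW u) 0 0 = 1 / a ^ 2.
Proof.
  intros Hs Hr0 Hr Ha Hu0 Hv1.
  rewrite (curv_axes _ _ _ (fun s => 2 * s * u1 0 / ((s ^ 2 / 2 + a) * (1 + s ^ 2 * u1 0)))
      (fun _ => 0) r Hr0).
  - rewrite Derive_const.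
    assert (H0 : Rabs 0 < r) by (apply abs0_lt; auto).
    rewrite (py_f u u1 u2 r) by auto.
    rewrite (is_derive_unique _ 0 (2 * u1 0 / a)).
    + assert (Hv : u1 0 = 1 / (2 * a)) by (apply (Rmult_eq_reg_l a); [rewrite Hv1; field|]; auto).
      rewrite Hv. field; auto.
    + auto_derive.
      * nz a.
      * Req. field. auto.
  - intros s Hsr. rewrite bl_h_unfold. rewrite pyX, pxX.
    assert (Hs0 : Rabs 0 < r) by (apply abs0_lt; auto).
    unfold py at 1.
    rewrite (Derive_ext_ball _ (fun q => - (s ^ 2 / 2 + u (s * q) + s * q * u1 (s * q))) 0 r Hs0)
      by (intros q Hq; apply (a1_web1 u u1 u2 r); auto).
    rewrite (a1_web1 u u1 u2 r), (px_f u u1 u2 r), (py_f u u1 u2 r); auto.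
    destruct (Hs (s * 0) (abs_m0_lt s r Hr0)) as [D0 D1].
    rewrite (is_derive_unique _ 0 (- (2 * s * u1 0))).
    + rewrite !Rmult_0_r, Hu0. apply Rdiv_eq2; ring.
    + auto_derive.
      * split; [exists (u1 (s * 0)); exact D0|]. split; [|exact I]. exists (u2 (s*0)); exact D1.
      * rewrite (Dfun _ _ _ D0), (Dfun _ _ _ D1). rewrite !Rmult_0_r. ring.
  - intros s Hsr. rewrite bl_h_unfold. rewrite pyX, pxX.
    unfold py at 1.
    rewrite (Derive_ext_ball _ (fun q => - (0 ^ 2 / 2 + u (0 * q) + 0 * q * u1 (0 * q))) s r Hsr)
      by (intros q Hq; apply (a1_web1 u u1 u2 r); auto; apply abs0_lt; auto).
    destruct (Hs (0 * s) (abs_0m_lt s r Hr0)) as [D0 D1].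
    rewrite (is_derive_unique _ s 0).
    + unfold Rdiv. ring.
    + auto_derive.
      * split; [exists (u1 (0 * s)); exact D0|]. split; [|exact I]. exists (u2 (0*s)); exact D1.
      * ring.
Qed.

Definition Aexpr k1 k2 f1 f2 g1 g2 : R := - (g1 * f2 - g2 * f1) / (k1 * f2 - k2 * f1).
Definition dAexpr k1 k2 f1 f2 g1 g2 df1 df2 dg1 dg2 : R :=
  - ((dg1 * f2 + g1 * df2 - dg2 * f1 - g2 * df1) * (k1 * f2 - k2 * f1)
     - (g1 * f2 - g2 * f1) * (k1 * df2 - k2 * df1)) / (k1 * f2 - k2 * f1) ^ 2.

Lemma der_Aexpr k1 k2 (p1 p2 p3 p4 : R -> R) q d1 d2 d3 d4 :
  is_derive p1 q d1 -> is_derive p2 q d2 -> is_derive p3 q d3 -> is_derive p4 q d4 ->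
  k1 * p2 q - k2 * p1 q <> 0 ->
  is_derive (fun z => Aexpr k1 k2 (p1 z) (p2 z) (p3 z) (p4 z)) q
    (dAexpr k1 k2 (p1 q) (p2 q) (p3 q) (p4 q) d1 d2 d3 d4).
Proof.
  intros H1 H2 H3 H4 Hd. unfold Aexpr, dAexpr.
  auto_derive.
  - repeat split; auto; eexists; eauto.
  - rewrite (Dfun p1 (fun _ => d1) q H1), (Dfun p2 (fun _ => d2) q H2),
      (Dfun p3 (fun _ => d3) q H3), (Dfun p4 (fun _ => d4) q H4).
    Req. field. auto.
Qed.

Definition Fx (u u1 : R -> R) x y := x ^ 2 / 2 + u (x * y) + x * y * u1 (x * y).
Definition Fy (u1 : R -> R) x y := 1 + x ^ 2 * u1 (x * y).
Definition Gx (u u1 : R -> R) x y := x ^ 2 / 2 - u (x * y) - x * y * u1 (x * y).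
Definition Gy (u1 : R -> R) x y := 1 - x ^ 2 * u1 (x * y).
Definition Fxy (u1 u2 : R -> R) x y := 2 * x * u1 (x * y) + x ^ 2 * y * u2 (x * y).
Definition Fyy (u2 : R -> R) x y := x ^ 3 * u2 (x * y).
Definition Fxx (u1 u2 : R -> R) x y := x + 2 * y * u1 (x * y) + x * y ^ 2 * u2 (x * y).
Definition Gxx (u1 u2 : R -> R) x y := x - 2 * y * u1 (x * y) - x * y ^ 2 * u2 (x * y).




Ltac dpre Hs x y r Hr Hx Hy :=
  let Ht := fresh "Ht" in let D0 := fresh "D0" in let D1 := fresh "D1" in
  pose proof (sq_lt x y r Hr Hx Hy) as Ht; destruct (Hs _ Ht) as [D0 D1].

Lemma der2 u u1 u2 r x y : smooth2 u u1 u2 r -> r <= 1 -> Rabs x < r -> Rabs y < r ->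
  is_derive (fun q => Fx u u1 x q) y (Fxy u1 u2 x y) /\
  is_derive (fun q => Fy u1 x q) y (Fyy u2 x y) /\
  is_derive (fun q => Gx u u1 x q) y (- Fxy u1 u2 x y) /\
  is_derive (fun q => Gy u1 x q) y (- Fyy u2 x y) /\
  is_derive (fun q => Fx u u1 q y) x (Fxx u1 u2 x y) /\
  is_derive (fun q => Fy u1 q y) x (Fxy u1 u2 x y) /\
  is_derive (fun q => Gx u u1 q y) x (Gxx u1 u2 x y) /\
  is_derive (fun q => Gy u1 q y) x (- Fxy u1 u2 x y).
Proof.
  intros Hs Hr Hx Hy.
  pose proof (sq_lt x y r Hr Hx Hy) as Ht; destruct (Hs _ Ht) as [D0 D1].
  unfold Fx, Fy, Gx, Gy, Fxy, Fyy, Fxx, Gxx.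
  repeat match goal with |- _ /\ _ => split end; auto_derive;
    try (repeat match goal with |- _ /\ _ => split end;
         first [exists (u1 (x * y)); exact D0 | exists (u2 (x * y)); exact D1 | exact I]);
    rewrite ?(Dfun _ _ _ D0), ?(Dfun _ _ _ D1); Req; field.
Qed.

Lemma px_f' u u1 u2 r x y : smooth2 u u1 u2 r -> r <= 1 -> Rabs x < r -> Rabs y < r ->
  px (fW u) x y = Fx u u1 x y.
Proof. intros; apply (px_f u u1 u2 r); auto. Qed.
Lemma py_f' u u1 u2 r x y : smooth2 u u1 u2 r -> r <= 1 -> Rabs x < r -> Rabs y < r ->
  py (fW u) x y = Fy u1 x y.
Proof. intros; apply (py_f u u1 u2 r); auto. Qed.
Lemma px_g' u u1 u2 r x y : smooth2 u u1 u2 r -> r <= 1 -> Rabs x < r -> Rabs y < r ->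
  px (gW u) x y = Gx u u1 x y.
Proof. intros; apply (px_g u u1 u2 r); auto. Qed.
Lemma py_g' u u1 u2 r x y : smooth2 u u1 u2 r -> r <= 1 -> Rabs x < r -> Rabs y < r ->
  py (gW u) x y = Gy u1 x y.
Proof. intros; apply (py_g u u1 u2 r); auto. Qed.

Lemma a1_web3 u u1 u2 r x y : smooth2 u u1 u2 r -> r <= 1 -> Rabs x < r -> Rabs y < r ->
  bl_a1 Xc (fW u) (gW u) x y = Aexpr 1 0 (Fx u u1 x y) (Fy u1 x y) (Gx u u1 x y) (Gy u1 x y).
Proof.
  intros. unfold bl_a1, wedge. rewrite !pxX, !pyX.
  rewrite (px_f' u u1 u2 r), (py_f' u u1 u2 r), (px_g' u u1 u2 r), (py_g' u u1 u2 r); auto.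
Qed.

Lemma a1_web4 u u1 u2 r x y : smooth2 u u1 u2 r -> r <= 1 -> Rabs x < r -> Rabs y < r ->
  bl_a1 Yc (fW u) (gW u) x y = Aexpr 0 1 (Fx u u1 x y) (Fy u1 x y) (Gx u u1 x y) (Gy u1 x y).
Proof.
  intros. unfold bl_a1, wedge. rewrite !pxY, !pyY.
  rewrite (px_f' u u1 u2 r), (py_f' u u1 u2 r), (px_g' u u1 u2 r), (py_g' u u1 u2 r); auto.
Qed.

Lemma small_s s r a : Rabs s < r -> r <= 1 -> r <= Rabs a -> a <> 0 ->
  0 < 1 + s ^ 2 * (1 / (2 * a)) /\ 0 < 1 - s ^ 2 * (1 / (2 * a)) /\
  s ^ 2 / 2 + a <> 0 /\ s ^ 2 / 2 - a <> 0.
Proof.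
  intros Hs Hr Hra Ha.
  assert (Hs2 : s ^ 2 < Rabs a).
  { rewrite <- (pow2_abs s). pose proof (Rabs_pos s). nra. }
  assert (Hpa : 0 < Rabs a) by (apply Rabs_pos_lt; auto).
  assert (Habs : Rabs (s ^ 2 * (1 / (2 * a))) < 1 / 2).
  { rewrite Rabs_mult, Rabs_right by (apply Rle_ge, pow2_ge_0).
    unfold Rdiv. rewrite Rmult_1_l, Rabs_inv, Rabs_mult, (Rabs_right 2) by lra.
    apply Rmult_lt_reg_r with (2 * Rabs a); [lra|].
    rewrite Rmult_assoc, Rinv_l by lra. lra. }
  apply Rabs_def2 in Habs.
  assert (Hs2' : Rabs (s ^ 2 / 2) < Rabs a).
  { rewrite Rabs_right; [lra|]. apply Rle_ge. pose proof (pow2_ge_0 s). lra. }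
  repeat split; try lra.
  - intro H. assert (a = - (s ^ 2 / 2)) by lra. subst. rewrite Rabs_Ropp in Hs2'. lra.
  - intro H. assert (a = s ^ 2 / 2) by lra. subst. lra.
Qed.

Lemma vals_s0 u u1 u2 a s : a <> 0 -> u 0 = a -> u1 0 = 1 / (2 * a) ->
  Fx u u1 s 0 = s ^ 2 / 2 + a /\ Fy u1 s 0 = 1 + s ^ 2 * (1 / (2 * a)) /\
  Gx u u1 s 0 = s ^ 2 / 2 - a /\ Gy u1 s 0 = 1 - s ^ 2 * (1 / (2 * a)) /\
  Fxy u1 u2 s 0 = 2 * s * (1 / (2 * a)) /\ Fyy u2 s 0 = s ^ 3 * u2 0 /\
  Fxx u1 u2 s 0 = s /\ Gxx u1 u2 s 0 = s.
Proof.
  intros Ha H0 H1. unfold Fx, Fy, Gx, Gy, Fxy, Fyy, Fxx, Gxx. rewrite !Rmult_0_r, H0, H1.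
  repeat split; field; auto.
Qed.

Lemma vals_0s u u1 u2 a s : a <> 0 -> u 0 = a -> u1 0 = 1 / (2 * a) ->
  Fx u u1 0 s = a /\ Fy u1 0 s = 1 /\
  Gx u u1 0 s = - a /\ Gy u1 0 s = 1 /\
  Fxy u1 u2 0 s = 0 /\ Fyy u2 0 s = 0 /\
  Fxx u1 u2 0 s = 2 * s * (1 / (2 * a)) /\ Gxx u1 u2 0 s = - (2 * s * (1 / (2 * a))).
Proof.
  intros Ha H0 H1. unfold Fx, Fy, Gx, Gy, Fxy, Fyy, Fxx, Gxx. rewrite !Rmult_0_l, H0, H1.
  repeat split; field; auto.
Qed.

Lemma curv_web3 u u1 u2 r a : smooth2 u u1 u2 r -> 0 < r -> r <= 1 -> r <= Rabs a -> a <> 0 ->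
  u 0 = a -> u1 0 = 1 / (2 * a) -> blaschke_curvature Xc (fW u) (gW u) 0 0 = 1 / a ^ 2.
Proof.
  intros Hs Hr0 Hr Hra Ha Hu0 Hv.
  set (v := 1 / (2 * a)).
  set (w := u2 0).
  assert (H0 : Rabs 0 < r) by (apply abs0_lt; auto).
  rewrite (curv_axes _ _ _
      (fun s => (0 - dAexpr 1 0 (s ^ 2 / 2 + a) (1 + s ^ 2 * v) (s ^ 2 / 2 - a) (1 - s ^ 2 * v)
                 (2 * s * v) (s ^ 3 * w) (- (2 * s * v)) (- (s ^ 3 * w)) * 1) /
                (Aexpr 1 0 (s ^ 2 / 2 + a) (1 + s ^ 2 * v) (s ^ 2 / 2 - a) (1 - s ^ 2 * v) *
                 (0 - (1 - s ^ 2 * v) * 1)))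
      (fun _ => 0) r Hr0).
  - rewrite Derive_const.
    rewrite (py_g' u u1 u2 r) by auto.
    destruct (vals_s0 u u1 u2 a 0 Ha Hu0 Hv) as (_ & _ & _ & Hgy & _).
    rewrite Hgy.
    rewrite (is_derive_unique _ 0 (1 / a ^ 2)).
    + field. auto.
    + unfold dAexpr, Aexpr. auto_derive.
      * unfold v. nz_all a.
      * Req. unfold v. field; nz_all a.
  - intros s Hsr. rewrite bl_h_unfold. rewrite pyX, pxX.
    unfold py at 1.
    rewrite (Derive_ext_ball _ (fun q => Aexpr 1 0 (Fx u u1 s q) (Fy u1 s q) (Gx u u1 s q) (Gy u1 s q)) 0 r H0)
      by (intros q Hq; apply (a1_web3 u u1 u2 r); auto).
    destruct (der2 u u1 u2 r s 0 Hs Hr Hsr H0) as (E1 & E2 & E3 & E4 & _).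
    destruct (small_s s r a Hsr Hr Hra Ha) as (P1 & P2 & P3 & P4).
    destruct (vals_s0 u u1 u2 a s Ha Hu0 Hv) as (V1 & V2 & V3 & V4 & V5 & V6 & _).
    assert (NZ : 1 * Fy u1 s 0 - 0 * Fx u u1 s 0 <> 0).
    { rewrite V1, V2. replace (1 * (1 + s ^ 2 * (1 / (2 * a))) - 0 * (s ^ 2 / 2 + a)) with (1 + s ^ 2 * (1 / (2 * a))) by ring. lra. }
    assert (DD : Derive (fun q => Aexpr 1 0 (Fx u u1 s q) (Fy u1 s q) (Gx u u1 s q) (Gy u1 s q)) 0 =
      dAexpr 1 0 (Fx u u1 s 0) (Fy u1 s 0) (Gx u u1 s 0) (Gy u1 s 0) (Fxy u1 u2 s 0) (Fyy u2 s 0)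
        (- Fxy u1 u2 s 0) (- Fyy u2 s 0)).
    { apply is_derive_unique. apply (der_Aexpr 1 0 (fun q => Fx u u1 s q) (fun q => Fy u1 s q)
        (fun q => Gx u u1 s q) (fun q => Gy u1 s q)); auto. }
    rewrite DD.
    rewrite (a1_web3 u u1 u2 r), (px_g' u u1 u2 r), (py_g' u u1 u2 r); auto.
    rewrite V1, V2, V3, V4, V5, V6. fold v w. rewrite !Rmult_0_r. reflexivity.
  - intros s Hsr. rewrite bl_h_unfold. rewrite pyX, pxX.
    unfold py at 1.
    rewrite (Derive_ext_ball _ (fun q => Aexpr 1 0 (Fx u u1 0 q) (Fy u1 0 q) (Gx u u1 0 q) (Gy u1 0 q)) s r Hsr)
      by (intros q Hq; apply (a1_web3 u u1 u2 r); auto).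
    destruct (der2 u u1 u2 r 0 s Hs Hr H0 Hsr) as (E1 & E2 & E3 & E4 & _).
    destruct (vals_0s u u1 u2 a s Ha Hu0 Hv) as (V1 & V2 & V3 & V4 & V5 & V6 & _).
    assert (NZ : 1 * Fy u1 0 s - 0 * Fx u u1 0 s <> 0).
    { rewrite V1, V2. lra. }
    assert (DD : Derive (fun q => Aexpr 1 0 (Fx u u1 0 q) (Fy u1 0 q) (Gx u u1 0 q) (Gy u1 0 q)) s =
      dAexpr 1 0 (Fx u u1 0 s) (Fy u1 0 s) (Gx u u1 0 s) (Gy u1 0 s) (Fxy u1 u2 0 s) (Fyy u2 0 s)
        (- Fxy u1 u2 0 s) (- Fyy u2 0 s)).
    { apply is_derive_unique. apply (der_Aexpr 1 0 (fun q => Fx u u1 0 q) (fun q => Fy u1 0 q)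
        (fun q => Gx u u1 0 q) (fun q => Gy u1 0 q)); auto. }
    rewrite DD.
    rewrite V1, V2, V3, V4, V5, V6. unfold dAexpr. unfold Rdiv. ring.
Qed.

Lemma curv_web4 u u1 u2 r a : smooth2 u u1 u2 r -> 0 < r -> r <= 1 -> r <= Rabs a -> a <> 0 ->
  u 0 = a -> u1 0 = 1 / (2 * a) -> blaschke_curvature Yc (fW u) (gW u) 0 0 = 1 / a ^ 2.
Proof.
  intros Hs Hr0 Hr Hra Ha Hu0 Hv.
  set (v := 1 / (2 * a)).
  assert (H0 : Rabs 0 < r) by (apply abs0_lt; auto).
  rewrite (curv_axes _ _ _
      (fun s => (dAexpr 0 1 (s ^ 2 / 2 + a) (1 + s ^ 2 * v) (s ^ 2 / 2 - a) (1 - s ^ 2 * v)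
                 s (2 * s * v) s (- (2 * s * v)) * 1 - 0) /
                (Aexpr 0 1 (s ^ 2 / 2 + a) (1 + s ^ 2 * v) (s ^ 2 / 2 - a) (1 - s ^ 2 * v) *
                 ((s ^ 2 / 2 - a) * 1 - 0)))
      (fun s => (dAexpr 0 1 a 1 (- a) 1 (2 * s * v) 0 (- (2 * s * v)) (- 0) * 1 - 0) /
                (Aexpr 0 1 a 1 (- a) 1 * ((- a) * 1 - 0)))
      r Hr0).
  - rewrite (py_g' u u1 u2 r), (px_g' u u1 u2 r) by auto.
    destruct (vals_s0 u u1 u2 a 0 Ha Hu0 Hv) as (_ & _ & Hgx & Hgy & _).
    rewrite Hgy, Hgx.
    rewrite (is_derive_unique _ 0 (1 / a ^ 2)).
    2:{ unfold dAexpr, Aexpr. auto_derive.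
        - unfold v. nz_all a.
        - Req. unfold v. field; nz_all a. }
    rewrite (is_derive_unique _ 0 0).
    2:{ unfold dAexpr, Aexpr. auto_derive.
        - unfold v. nz_all a.
        - Req. unfold v. field; nz_all a. }
    Req. field; nz_all a.
  - intros s Hsr. rewrite bl_h_unfold. rewrite pyY, pxY.
    unfold px at 1.
    rewrite (Derive_ext_ball _ (fun q => Aexpr 0 1 (Fx u u1 q 0) (Fy u1 q 0) (Gx u u1 q 0) (Gy u1 q 0)) s r Hsr)
      by (intros q Hq; apply (a1_web4 u u1 u2 r); auto).
    destruct (der2 u u1 u2 r s 0 Hs Hr Hsr H0) as (_ & _ & _ & _ & E1 & E2 & E3 & E4).
    destruct (small_s s r a Hsr Hr Hra Ha) as (P1 & P2 & P3 & P4).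
    destruct (vals_s0 u u1 u2 a s Ha Hu0 Hv) as (V1 & V2 & V3 & V4 & V5 & V6 & V7 & V8).
    assert (NZ : 0 * Fy u1 s 0 - 1 * Fx u u1 s 0 <> 0).
    { rewrite V1, V2. replace (0 * (1 + s ^ 2 * (1 / (2 * a))) - 1 * (s ^ 2 / 2 + a)) with (- (s ^ 2 / 2 + a)) by ring.
      apply Ropp_neq_0_compat; auto. }
    assert (DD : Derive (fun q => Aexpr 0 1 (Fx u u1 q 0) (Fy u1 q 0) (Gx u u1 q 0) (Gy u1 q 0)) s =
      dAexpr 0 1 (Fx u u1 s 0) (Fy u1 s 0) (Gx u u1 s 0) (Gy u1 s 0) (Fxx u1 u2 s 0) (Fxy u1 u2 s 0)
        (Gxx u1 u2 s 0) (- Fxy u1 u2 s 0)).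
    { apply is_derive_unique. apply (der_Aexpr 0 1 (fun q => Fx u u1 q 0) (fun q => Fy u1 q 0)
        (fun q => Gx u u1 q 0) (fun q => Gy u1 q 0)); auto. }
    rewrite DD.
    rewrite (a1_web4 u u1 u2 r), (px_g' u u1 u2 r), (py_g' u u1 u2 r); auto.
    rewrite V1, V2, V3, V4, V5, V7, V8. fold v. rewrite !Rmult_0_r. reflexivity.
  - intros s Hsr. rewrite bl_h_unfold. rewrite pyY, pxY.
    unfold px at 1.
    rewrite (Derive_ext_ball _ (fun q => Aexpr 0 1 (Fx u u1 q s) (Fy u1 q s) (Gx u u1 q s) (Gy u1 q s)) 0 r H0)
      by (intros q Hq; apply (a1_web4 u u1 u2 r); auto).
    destruct (der2 u u1 u2 r 0 s Hs Hr H0 Hsr) as (_ & _ & _ & _ & E1 & E2 & E3 & E4).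
    destruct (vals_0s u u1 u2 a s Ha Hu0 Hv) as (V1 & V2 & V3 & V4 & V5 & V6 & V7 & V8).
    assert (NZ : 0 * Fy u1 0 s - 1 * Fx u u1 0 s <> 0).
    { rewrite V1, V2. replace (0 * 1 - 1 * a) with (- a) by ring. apply Ropp_neq_0_compat; auto. }
    assert (DD : Derive (fun q => Aexpr 0 1 (Fx u u1 q s) (Fy u1 q s) (Gx u u1 q s) (Gy u1 q s)) 0 =
      dAexpr 0 1 (Fx u u1 0 s) (Fy u1 0 s) (Gx u u1 0 s) (Gy u1 0 s) (Fxx u1 u2 0 s) (Fxy u1 u2 0 s)
        (Gxx u1 u2 0 s) (- Fxy u1 u2 0 s)).
    { apply is_derive_unique. apply (der_Aexpr 0 1 (fun q => Fx u u1 q s) (fun q => Fy u1 q s)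
        (fun q => Gx u u1 q s) (fun q => Gy u1 q s)); auto. }
    rewrite DD.
    rewrite (a1_web4 u u1 u2 r), (px_g' u u1 u2 r), (py_g' u u1 u2 r); auto.
    rewrite V1, V2, V3, V4, V5, V7, V8. fold v. rewrite !Rmult_0_r. reflexivity.
Qed.

Lemma zero_deriv (F : R -> R) t r l : Rabs t < r -> (forall s, Rabs s < r -> F s = 0) ->
  is_derive F t l -> l = 0.
Proof.
  intros Ht HF Hd.
  assert (H0 : is_derive F t 0).
  { apply (is_derive_ext_loc (fun _ => 0)).
    - apply (filter_imp (fun s => Rabs s < r)); [|apply loc_ball; auto].
      intros s Hs. symmetry. apply HF; auto.
    - apply (is_derive_const 0 t). }
  rewrite <- (is_derive_unique _ _ _ Hd). apply is_derive_unique; auto.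
Qed.

Lemma const_of_deriv (F : R -> R) r : (forall s, Rabs s < r -> is_derive F s 0) ->
  forall s, Rabs s < r -> F s = F 0.
Proof.
  intros HF s Hs.
  destruct (Rtotal_order s 0) as [Hlt|[Heq|Hgt]].
  - apply (eq_is_derive F s 0); [|lra].
    intros t Ht. apply HF. rewrite Rabs_left1 in Hs by lra. unfold Rabs; destruct Rcase_abs; lra.
  - subst; reflexivity.
  - symmetry. apply (eq_is_derive F 0 s); [|lra].
    intros t Ht. apply HF. rewrite Rabs_right in Hs by lra. unfold Rabs; destruct Rcase_abs; lra.
Qed.

Lemma isd_plus (f g : R -> R) x df dg : is_derive f x df -> is_derive g x dg ->
  is_derive (fun s => f s + g s) x (df + dg).
Proof. intros. apply (is_derive_plus f g); auto. Qed.
Lemma isd_minus (f g : R -> R) x df dg : is_derive f x df -> is_derive g x dg ->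
  is_derive (fun s => f s - g s) x (df - dg).
Proof. intros. apply (is_derive_minus f g); auto. Qed.
Lemma isd_mult (f g : R -> R) x df dg : is_derive f x df -> is_derive g x dg ->
  is_derive (fun s => f s * g s) x (df * g x + f x * dg).
Proof. intros. apply (is_derive_mult f g); auto. intros; apply Rmult_comm. Qed.
Lemma isd_scal (f : R -> R) k x df : is_derive f x df ->
  is_derive (fun s => k * f s) x (k * df).
Proof. intros. apply (is_derive_scal f); auto. Qed.
Lemma isd_const (k x : R) : is_derive (fun _ => k) x 0.
Proof. apply (is_derive_const k x). Qed.
Lemma isd_comp (f g : R -> R) x df dg : is_derive f (g x) df -> is_derive g x dg ->
  is_derive (fun s => f (g s)) x (dg * df).
Proof. intros. apply (is_derive_comp f g); auto. Qed.

Lemma fg_small u r B : (forall t, Rabs t < r -> Rabs (u t) <= B) -> 0 <= B -> 0 < r -> r <= 1 ->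
  forall eps, 0 < eps -> exists d, 0 < d /\ d <= eps /\ d <= r /\
   forall x y, Rabs x < d -> Rabs y < d -> Rabs (fW u x y) < eps /\ Rabs (gW u x y) < eps.
Proof.
  intros HB HB0 Hr0 Hr eps Heps.
  set (d := Rmin (eps / (2 + B)) r).
  assert (Hd1 : d <= eps / (2 + B)) by apply Rmin_l.
  assert (Hd2 : d <= r) by apply Rmin_r.
  assert (Hd0 : 0 < d) by (apply Rmin_pos; [apply Rdiv_lt_0_compat|]; lra).
  assert (Hde : d * (2 + B) <= eps).
  { apply (Rmult_le_compat_r (2 + B)) in Hd1; [|lra].
    replace (eps / (2 + B) * (2 + B)) with eps in Hd1 by (field; lra). lra. }
  exists d. split; [auto|split; [|split; [auto|]]].
  - apply Rle_trans with (d * (2 + B)); [|auto]. nra.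
  - intros x y Hx Hy.
    assert (Hxy : Rabs (x * y) < r) by (apply sq_lt; lra).
    pose proof (HB _ Hxy) as Hu.
    assert (Hx3 : Rabs (x ^ 3 / 6) <= Rabs x / 6).
    { unfold Rdiv. rewrite Rabs_mult, <- RPow_abs. rewrite (Rabs_right (/6)) by lra.
      pose proof (Rabs_pos x). assert (Rabs x ^ 3 <= Rabs x) by (simpl; nra). lra. }
    assert (Hxu : Rabs (x * u (x * y)) <= Rabs x * B).
    { rewrite Rabs_mult. apply Rmult_le_compat_l; auto. apply Rabs_pos. }
    pose proof (Rabs_pos x). pose proof (Rabs_pos y).
    assert (Hsum : Rabs x / 6 + Rabs y + Rabs x * B < eps).
    { apply Rle_lt_trans with (d / 6 + d + d * B + 0); [|nra].
      assert (Rabs x * B <= d * B) by nra. lra. }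
    unfold fW, gW. split.
    + eapply Rle_lt_trans; [apply Rabs_triang|].
      eapply Rle_lt_trans; [apply Rplus_le_compat_r, Rabs_triang|]. lra.
    + unfold Rminus. eapply Rle_lt_trans; [apply Rabs_triang|].
      eapply Rle_lt_trans; [apply Rplus_le_compat_r, Rabs_triang|]. rewrite Rabs_Ropp. lra.
Qed.

Lemma ch_fx P P1 u u1 u2 r x y : smooth2 u u1 u2 r -> r <= 1 -> Rabs x < r -> Rabs y < r ->
  is_derive P (fW u x y) (P1 (fW u x y)) ->
  is_derive (fun s => P (fW u s y)) x (Fx u u1 x y * P1 (fW u x y)).
Proof. intros. apply (isd_comp P (fun s => fW u s y)); auto. apply (der_fx u u1 u2 r); auto. Qed.
Lemma ch_gx P P1 u u1 u2 r x y : smooth2 u u1 u2 r -> r <= 1 -> Rabs x < r -> Rabs y < r ->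
  is_derive P (gW u x y) (P1 (gW u x y)) ->
  is_derive (fun s => P (gW u s y)) x (Gx u u1 x y * P1 (gW u x y)).
Proof. intros. apply (isd_comp P (fun s => gW u s y)); auto. apply (der_gx u u1 u2 r); auto. Qed.
Lemma ch_fy P P1 u u1 u2 r x y : smooth2 u u1 u2 r -> r <= 1 -> Rabs x < r -> Rabs y < r ->
  is_derive P (fW u x y) (P1 (fW u x y)) ->
  is_derive (fun s => P (fW u x s)) y (Fy u1 x y * P1 (fW u x y)).
Proof. intros. apply (isd_comp P (fun s => fW u x s)); auto. apply (der_fy u u1 u2 r); auto. Qed.
Lemma ch_gy P P1 u u1 u2 r x y : smooth2 u u1 u2 r -> r <= 1 -> Rabs x < r -> Rabs y < r ->
  is_derive P (gW u x y) (P1 (gW u x y)) ->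
  is_derive (fun s => P (gW u x s)) y (Gy u1 x y * P1 (gW u x y)).
Proof. intros. apply (isd_comp P (fun s => gW u x s)); auto. apply (der_gy u u1 u2 r); auto. Qed.

Lemma fW_0y u y : fW u 0 y = y.
Proof. unfold fW. field. Qed.
Lemma gW_0y u y : gW u 0 y = y.
Proof. unfold gW. field. Qed.
Lemma fW_x0 u a x : u 0 = a -> fW u x 0 = x ^ 3 / 6 + a * x.
Proof. intros H. unfold fW. rewrite Rmult_0_r, H. field. Qed.
Lemma gW_x0 u a x : u 0 = a -> gW u x 0 = x ^ 3 / 6 - a * x.
Proof. intros H. unfold gW. rewrite Rmult_0_r, H. field. Qed.

Lemma isd_eq (f : R -> R) x l l' : is_derive f x l -> l = l' -> is_derive f x l'.
Proof. intros H ->; auto. Qed.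
Lemma isd_id x : is_derive (fun s : R => s) x 1.
Proof. apply (is_derive_id x). Qed.

Lemma lt_trans_le x d e : Rabs x < d -> d <= e -> Rabs x < e.
Proof. lra. Qed.

Lemma AR_structure u u1 u2 r a B p1 p2 p3 p4 q1 q2 q3 q4 w1 w2 w3 w4 rho :
  smooth2 u u1 u2 r -> 0 < r -> r <= 1 -> a <> 0 -> u 0 = a -> u1 0 = 1 / (2 * a) ->
  (forall t, Rabs t < r -> Rabs (u t) <= B) -> 0 <= B ->
  0 < rho -> smooth2 p1 q1 w1 rho -> smooth2 p2 q2 w2 rho -> smooth2 p3 q3 w3 rho ->
  smooth2 p4 q4 w4 rho ->
  (exists e0, 0 < e0 /\ forall x y, Rabs x < e0 -> Rabs y < e0 ->
     p1 x + p2 y + p3 (fW u x y) + p4 (gW u x y) = 0) ->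
  exists be e, 0 < e /\ forall s, Rabs s < e ->
    p1 s = p1 0 + be * (s ^ 3 / 3) /\ p2 s = p2 0 + be * (2 * s) /\
    p3 s = p3 0 + be * (- s) /\ p4 s = p4 0 + be * (- s).
Proof.
  intros Hs Hr0 Hr Ha Hu0 Hv HB HB0 Hrho S1 S2 S3 S4 [e0 [He0 HAR]].
  set (d1 := Rmin (Rmin rho e0) r).
  assert (Hd1 : 0 < d1) by (apply Rmin_pos; [apply Rmin_pos|]; auto).
  assert (Hd1r : d1 <= rho) by (unfold d1; eapply Rle_trans; [apply Rmin_l|apply Rmin_l]).
  assert (Hd1e : d1 <= e0) by (unfold d1; eapply Rle_trans; [apply Rmin_l|apply Rmin_r]).
  assert (Hd1u : d1 <= r) by (unfold d1; apply Rmin_r).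
  destruct (fg_small u r B HB HB0 Hr0 Hr d1 Hd1) as [d2 [Hd2 [Hd21 [Hd2r Hfg2]]]].
  destruct (fg_small u r B HB HB0 Hr0 Hr d2 Hd2) as [d3 [Hd3 [Hd32 [Hd3r Hfg3]]]].
  destruct (fg_small u r B HB HB0 Hr0 Hr d3 Hd3) as [d4 [Hd4 [Hd43 [Hd4r Hfg4]]]].
  assert (S1a : forall s, Rabs s < d2 -> p2 s + p3 s + p4 s = - p1 0).
  { intros s Hs2. pose proof (HAR 0 s ltac:(rewrite Rabs_R0; lra) ltac:(lra)) as H.
    rewrite fW_0y, gW_0y in H. lra. }
  set (c := - q1 0 / a).
  assert (S1b : forall s, Rabs s < d2 -> q3 s - q4 s = c).
  { intros y Hy.
    assert (Hd : is_derive (fun x => p1 x + p2 y + p3 (fW u x y) + p4 (gW u x y)) 0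
       (q1 0 + 0 + Fx u u1 0 y * q3 (fW u 0 y) + Gx u u1 0 y * q4 (gW u 0 y))).
    { assert (H0 : Rabs 0 < r) by (rewrite Rabs_R0; lra).
      apply isd_plus; [apply isd_plus; [apply isd_plus|]|].
      - apply (proj1 (S1 0 ltac:(rewrite Rabs_R0; lra))).
      - apply isd_const.
      - apply (ch_fx p3 q3 u u1 u2 r); auto; try lra. rewrite fW_0y. apply (proj1 (S3 y ltac:(lra))).
      - apply (ch_gx p4 q4 u u1 u2 r); auto; try lra. rewrite gW_0y. apply (proj1 (S4 y ltac:(lra))). }
    apply (zero_deriv _ 0 d2) in Hd.
    2: rewrite Rabs_R0; lra.
    2: { intros x Hx. apply HAR; lra. }
    destruct (vals_0s u u1 u2 a y Ha Hu0 Hv) as (V1 & _ & V3 & _).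
    rewrite V1, V3, fW_0y, gW_0y in Hd. unfold c. field_simplify; auto.
    apply (Rmult_eq_reg_l a); auto. field_simplify; auto. lra. }
  assert (S1c : forall s, Rabs s < d2 -> p3 s - p4 s = c * s + (p3 0 - p4 0)).
  { intros s Hs2.
    assert (Hd : forall t, Rabs t < d2 -> is_derive (fun s => p3 s - p4 s - c * s) t 0).
    { intros t Ht. eapply isd_eq.
      - apply isd_minus; [apply isd_minus|apply isd_scal, isd_id].
        + apply (proj1 (S3 t ltac:(lra))).
        + apply (proj1 (S4 t ltac:(lra))).
      - Req. rewrite S1b; auto. ring. }
    pose proof (const_of_deriv _ d2 Hd s Hs2) as H. cbv beta in H. rewrite Rmult_0_r in H. lra. }
  set (Phi := fun x y => 2 * p1 x + 2 * p2 y - 2 * p1 0 - p2 (fW u x y) - p2 (gW u x y)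
                         + c * (fW u x y - gW u x y)).
  assert (K2 : forall x y, Rabs x < d3 -> Rabs y < d3 -> Phi x y = 0).
  { intros x y Hx Hy. destruct (Hfg3 x y Hx Hy) as [Hf Hg].
    pose proof (HAR x y ltac:(lra) ltac:(lra)) as H.
    pose proof (S1a _ Hf) as A1. pose proof (S1a _ Hg) as A2.
    pose proof (S1c _ Hf) as C1. pose proof (S1c _ Hg) as C2.
    unfold Phi. lra. }
  assert (Hd3u : d3 <= r) by lra.
  assert (Hd3rho : d3 <= rho) by lra.
  assert (K3a : forall x y, Rabs x < d3 -> Rabs y < d3 ->
    2 * q1 x - Fx u u1 x y * q2 (fW u x y) - Gx u u1 x y * q2 (gW u x y)
      + c * (Fx u u1 x y - Gx u u1 x y) = 0).
  { intros x y Hx Hy. destruct (Hfg3 x y Hx Hy) as [Hf Hg].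
    assert (Hd : is_derive (fun s => Phi s y) x
      (2 * q1 x - Fx u u1 x y * q2 (fW u x y) - Gx u u1 x y * q2 (gW u x y)
      + c * (Fx u u1 x y - Gx u u1 x y))).
    { unfold Phi. eapply isd_eq.
      - apply isd_plus; [apply isd_minus; [apply isd_minus; [apply isd_minus; [apply isd_plus|]|]|]|].
        + apply isd_scal. apply (proj1 (S1 x ltac:(lra))).
        + apply isd_const.
        + apply isd_const.
        + apply (ch_fx p2 q2 u u1 u2 r); auto; try lra. apply (proj1 (S2 (fW u x y) ltac:(lra))).
        + apply (ch_gx p2 q2 u u1 u2 r); auto; try lra. apply (proj1 (S2 (gW u x y) ltac:(lra))).
        + apply isd_scal. apply isd_minus.
          * apply (der_fx u u1 u2 r); auto; lra.
          * apply (der_gx u u1 u2 r); auto; lra.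
      - Req. unfold Fx, Gx. ring. }
    eapply (zero_deriv _ x d3); [auto| |exact Hd].
    intros t Ht. apply K2; auto. }
  set (v := 1 / (2 * a)).
  assert (K3b : forall y, Rabs y < d3 -> 2 * w1 0 - 2 * a ^ 2 * w2 y + 4 * c * v * y = 0).
  { intros y Hy.
    assert (H0 : Rabs 0 < d3) by (rewrite Rabs_R0; lra).
    assert (H0r : Rabs 0 < r) by (rewrite Rabs_R0; lra).
    destruct (der2 u u1 u2 r 0 y Hs Hr H0r ltac:(lra)) as (_ & _ & _ & _ & E5 & _ & E7 & _).
    assert (Hd : is_derive (fun s => 2 * q1 s - Fx u u1 s y * q2 (fW u s y) - Gx u u1 s y * q2 (gW u s y)
      + c * (Fx u u1 s y - Gx u u1 s y)) 0
      (2 * w1 0 - (Fxx u1 u2 0 y * q2 (fW u 0 y) + Fx u u1 0 y * (Fx u u1 0 y * w2 (fW u 0 y)))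
        - (Gxx u1 u2 0 y * q2 (gW u 0 y) + Gx u u1 0 y * (Gx u u1 0 y * w2 (gW u 0 y)))
        + c * (Fxx u1 u2 0 y - Gxx u1 u2 0 y))).
    { apply isd_plus; [apply isd_minus; [apply isd_minus|]|].
      - apply isd_scal. apply (proj2 (S1 0 ltac:(lra))).
      - apply (isd_mult (fun s => Fx u u1 s y) (fun s => q2 (fW u s y))); auto.
        apply (ch_fx q2 w2 u u1 u2 r); auto; try lra. rewrite fW_0y. apply (proj2 (S2 y ltac:(lra))).
      - apply (isd_mult (fun s => Gx u u1 s y) (fun s => q2 (gW u s y))); auto.
        apply (ch_gx q2 w2 u u1 u2 r); auto; try lra. rewrite gW_0y. apply (proj2 (S2 y ltac:(lra))).
      - apply isd_scal. apply isd_minus; auto. }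
    apply (zero_deriv _ 0 d3) in Hd; [|auto|intros t Ht; apply K3a; auto].
    destruct (vals_0s u u1 u2 a y Ha Hu0 Hv) as (V1 & _ & V3 & _ & _ & _ & V7 & V8).
    rewrite V1, V3, V7, V8, fW_0y, gW_0y in Hd. fold v in Hd. nra. }
  assert (Ha2 : a ^ 2 <> 0) by (apply pow_nonzero; auto).
  assert (K3c : forall s, Rabs s < d3 -> q2 s = q2 0 + (w1 0 * s + c * v * s ^ 2) / a ^ 2).
  { intros s Hs3.
    assert (Hd : forall t, Rabs t < d3 -> is_derive (fun s => q2 s - (w1 0 * s + c * v * s ^ 2) / a ^ 2) t 0).
    { intros t Ht. eapply isd_eq.
      - apply isd_minus; [apply (proj2 (S2 t ltac:(lra)))|].
        assert (is_derive (fun s => (w1 0 * s + c * v * s ^ 2) / a ^ 2) t ((w1 0 + 2 * c * v * t) / a ^ 2)).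
        { auto_derive; auto. Req. field. auto. }
        eauto.
      - Req. pose proof (K3b t Ht).
        replace (w2 t) with ((w1 0 + 2 * c * v * t) / a ^ 2).
        + ring.
        + apply (Rmult_eq_reg_l (a ^ 2)); auto.
          replace (a ^ 2 * ((w1 0 + 2 * c * v * t) / a ^ 2)) with (w1 0 + 2 * c * v * t) by (field; auto).
          lra. }
    pose proof (const_of_deriv _ d3 Hd s Hs3) as H. cbv beta in H.
    replace ((w1 0 * 0 + c * v * 0 ^ 2) / a ^ 2) with 0 in H by (field; auto). lra. }
  assert (K4 : forall x, Rabs x < d4 -> - (4 * w1 0 / (3 * a ^ 2)) * x ^ 3 - (7 * c / (36 * a ^ 3)) * x ^ 6 = 0).
  { intros x Hx.
    assert (H0 : Rabs 0 < d4) by (rewrite Rabs_R0; lra).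
    assert (H03 : Rabs 0 < d3) by (rewrite Rabs_R0; lra).
    destruct (Hfg4 x 0 Hx H0) as [Hf Hg].
    assert (Hd : is_derive (fun s => Phi x s) 0
      (2 * q2 0 - Fy u1 x 0 * q2 (fW u x 0) - Gy u1 x 0 * q2 (gW u x 0) + c * (Fy u1 x 0 - Gy u1 x 0))).
    { unfold Phi. eapply isd_eq.
      - apply isd_plus; [apply isd_minus; [apply isd_minus; [apply isd_minus; [apply isd_plus|]|]|]|].
        + apply isd_const.
        + apply isd_scal. apply (proj1 (S2 0 ltac:(lra))).
        + apply isd_const.
        + apply (ch_fy p2 q2 u u1 u2 r); auto; try lra. apply (proj1 (S2 (fW u x 0) ltac:(lra))).
        + apply (ch_gy p2 q2 u u1 u2 r); auto; try lra. apply (proj1 (S2 (gW u x 0) ltac:(lra))).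
        + apply isd_scal. apply isd_minus.
          * apply (der_fy u u1 u2 r); auto; lra.
          * apply (der_gy u u1 u2 r); auto; lra.
      - Req. unfold Fy, Gy. ring. }
    apply (zero_deriv _ 0 d3) in Hd; [|auto|intros t Ht; apply K2; auto; lra].
    destruct (vals_s0 u u1 u2 a x Ha Hu0 Hv) as (_ & V2 & _ & V4 & _).
    rewrite (K3c _ Hf), (K3c _ Hg) in Hd.
    rewrite V2, V4, (fW_x0 u a x Hu0), (gW_x0 u a x Hu0) in Hd. fold v in Hd.
    match type of Hd with ?Y = _ => transitivity Y; [|exact Hd] end. unfold v. field. auto. }
  assert (Hc0 : c = 0 /\ w1 0 = 0).
  { set (x0 := d4 / 2).
    assert (Hx0 : Rabs x0 < d4) by (unfold x0; rewrite Rabs_right; lra).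
    assert (Hx1 : Rabs (x0 / 2) < d4) by (unfold x0; rewrite Rabs_right; lra).
    pose proof (K4 _ Hx0) as E1. pose proof (K4 _ Hx1) as E2.
    set (Q1 := 4 * w1 0 / (3 * a ^ 2)) in *. set (Q2 := 7 * c / (36 * a ^ 3)) in *.
    set (X := x0 ^ 3) in *.
    assert (HX : X <> 0) by (unfold X, x0; apply pow_nonzero; lra).
    replace ((x0 / 2) ^ 3) with (X / 8) in E2 by (unfold X; field).
    replace ((x0 / 2) ^ 6) with (X ^ 2 / 64) in E2 by (unfold X; field).
    replace (x0 ^ 6) with (X ^ 2) in E1 by (unfold X; ring).
    assert (HQ2 : Q2 * X ^ 2 = 0) by lra.
    assert (HX2 : X ^ 2 <> 0) by (apply pow_nonzero; auto).
    assert (Q2z : Q2 = 0) by (apply (Rmult_eq_reg_r (X ^ 2)); auto; lra).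
    assert (Q1z : Q1 = 0).
    { rewrite Q2z in E1. apply (Rmult_eq_reg_r X); auto. lra. }
    assert (Ha3 : a ^ 3 <> 0) by (apply pow_nonzero; auto).
    split.
    - replace c with (Q2 * (36 * a ^ 3) / 7) by (unfold Q2; field; auto). rewrite Q2z. field.
    - replace (w1 0) with (Q1 * (3 * a ^ 2) / 4) by (unfold Q1; field; auto). rewrite Q1z. field. }
  destruct Hc0 as [Hc Hw].
  assert (K5a : forall s, Rabs s < d3 -> q2 s = q2 0).
  { intros s Hs3. rewrite (K3c s Hs3), Hc, Hw. field. auto. }
  assert (K5b : forall s, Rabs s < d3 -> p2 s = p2 0 + q2 0 * s).
  { intros s Hs3.
    assert (Hd : forall t, Rabs t < d3 -> is_derive (fun s => p2 s - q2 0 * s) t 0).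
    { intros t Ht. eapply isd_eq.
      - apply isd_minus; [apply (proj1 (S2 t ltac:(lra)))|apply isd_scal, isd_id].
      - Req. rewrite (K5a t Ht). ring. }
    pose proof (const_of_deriv _ d3 Hd s Hs3) as H. cbv beta in H. lra. }
  exists (q2 0 / 2), d4. split; auto.
  intros s Hs4.
  assert (Hs3 : Rabs s < d3) by lra.
  assert (Hs2 : Rabs s < d2) by lra.
  assert (H02 : Rabs 0 < d2) by (rewrite Rabs_R0; lra).
  pose proof (S1a s Hs2) as A1. pose proof (S1a 0 H02) as A0.
  pose proof (S1c s Hs2) as C1. rewrite Hc in C1.
  pose proof (K5b s Hs3) as B1.
  assert (HP1 : p1 s = p1 0 + q2 0 / 2 * (s ^ 3 / 3)).
  { assert (H0 : Rabs 0 < d4) by (rewrite Rabs_R0; lra).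
    destruct (Hfg4 s 0 Hs4 H0) as [Hf Hg].
    pose proof (K2 s 0 Hs3 ltac:(rewrite Rabs_R0; lra)) as H. unfold Phi in H.
    rewrite (K5b _ Hf), (K5b _ Hg), Hc in H.
    rewrite (fW_x0 u a s Hu0), (gW_x0 u a s Hu0) in H.
    replace (p2 0) with (p2 0 + q2 0 * 0) in H at 1 by ring.
    rewrite <- (K5b 0 ltac:(rewrite Rabs_R0; lra)) in H.
    lra. }
  repeat split; auto; lra.
Qed.

Lemma monom_sum (c : R) (k : nat) (t : R) n :
  sum_n (fun m => scal (pow_n t m) (if Nat.eqb m k then c else 0)) n =
  if Nat.leb k n then c * t ^ k else 0.
Proof.
  induction n.
  - rewrite sum_O. change scal with Rmult. replace (pow_n t 0) with (t ^ 0) by (symmetry; apply pow_n_pow).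
    destruct k; simpl; ring.
  - rewrite sum_Sn, IHn. change plus with Rplus. change scal with Rmult. replace (pow_n t (S n)) with (t ^ S n) by (symmetry; apply pow_n_pow).
    destruct (Nat.eqb_spec (S n) k) as [<-|Hne].
    + assert (Nat.leb (S n) n = false) as -> by (apply Nat.leb_gt; lia).
      rewrite Nat.leb_refl. Req; ring.
    + destruct (Nat.leb_spec k n); destruct (Nat.leb_spec k (S n)); try lia; Req; ring.
Qed.

Lemma analytic_monom (c : R) (k : nat) : analytic_at 0 (fun s => c * s ^ k).
Proof.
  exists 1. split; [lra|]. exists (fun m => if Nat.eqb m k then c else 0).
  intros t _. rewrite Rminus_0_r. unfold is_pseries, is_series.
  apply (filterlim_ext_loc (fun _ => c * t ^ k)).
  - exists k. intros n Hn. rewrite monom_sum.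
    assert (Nat.leb k n = true) as -> by (apply Nat.leb_le; lia). reflexivity.
  - apply filterlim_const.
Qed.

Lemma analytic_ext c p q : (forall t, p t = q t) -> analytic_at c p -> analytic_at c q.
Proof.
  intros H [r [Hr [al Hal]]]. exists r. split; auto. exists al. intros t Ht. rewrite <- H. auto.
Qed.

Lemma smooth2_mono u u1 u2 r r' : smooth2 u u1 u2 r -> r' <= r -> smooth2 u u1 u2 r'.
Proof. intros H Hr t Ht. apply H. lra. Qed.

Lemma smooth2_opp u u1 u2 r : smooth2 u u1 u2 r ->
  smooth2 (fun t => - u t) (fun t => - u1 t) (fun t => - u2 t) r.
Proof.
  intros H t Ht. destruct (H t Ht) as [H1 H2]. split.
  - apply (is_derive_opp u t (u1 t)); auto.
  - apply (is_derive_opp u1 t (u2 t)); auto.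
Qed.

Lemma gW_opp u : gW u = fW (fun t => - u t).
Proof.
  apply functional_extensionality; intro x. apply functional_extensionality; intro y.
  unfold gW, fW. ring.
Qed.

Lemma not_hex F1 F2 F3 : blaschke_curvature F1 F2 F3 0 0 <> 0 -> ~ hexagonal_at0 F1 F2 F3.
Proof.
  intros H [e [He Hh]]. apply H. apply Hh; rewrite Rabs_R0; auto.
Qed.

Lemma cont_bound u u1 r a : (forall t, Rabs t < r -> is_derive u t (u1 t)) -> 0 < r -> u 0 = a ->
  exists d, 0 < d /\ forall t, Rabs t < d -> Rabs (u t) <= Rabs a + 1.
Proof.
  intros H Hr Hu0.
  assert (Hc : continuous u 0).
  { apply ex_derive_continuous. exists (u1 0). apply H. rewrite Rabs_R0; auto. }
  assert (Hone : 0 < 1) by lra.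
  destruct (Hc (ball (u 0) (mkposreal 1 Hone)) (locally_ball _ _)) as [eps Heps].
  exists eps. split; [apply cond_pos|].
  intros t Ht. assert (Hb : ball 0 eps t).
  { change (Rabs (t - 0) < eps). rewrite Rminus_0_r. auto. }
  specialize (Heps t Hb). change (Rabs (u t - u 0) < 1) in Heps.
  rewrite Hu0 in Heps. pose proof (Rabs_triang_inv (u t) a). lra.
Qed.

Lemma inv_a2_nz a : a <> 0 -> 1 / a ^ 2 <> 0.
Proof.
  intros Ha. unfold Rdiv. rewrite Rmult_1_l. apply Rinv_neq_0_compat, pow_nonzero; auto.
Qed.

Lemma fW00 u : fW u 0 0 = 0.
Proof. apply fW_0y. Qed.
Lemma gW00 u : gW u 0 0 = 0.
Proof. apply gW_0y. Qed.

Lemma AR_beta u u1 u2 r a p1 p2 p3 p4 :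
  smooth2 u u1 u2 r -> 0 < r -> r <= 1 -> a <> 0 -> u 0 = a -> u1 0 = 1 / (2 * a) ->
  (forall t, Rabs t < r -> Rabs (u t) <= Rabs a + 1) ->
  abelian_relation Xc Yc (fW u) (gW u) p1 p2 p3 p4 ->
  exists be e, 0 < e /\ forall s, Rabs s < e ->
    p1 s = p1 0 + be * (s ^ 3 / 3) /\ p2 s = p2 0 + be * (2 * s) /\
    p3 s = p3 0 + be * (- s) /\ p4 s = p4 0 + be * (- s).
Proof.
  intros Hs Hr0 Hr Ha Hu0 Hv HB [A1 [A2 [A3 [A4 [e0 [He0 HAR]]]]]].
  change (analytic_at 0 p1) in A1. change (analytic_at 0 p2) in A2.
  rewrite fW00 in A3. rewrite gW00 in A4.
  destruct (analytic_smooth p1 A1) as [r1 [Hr1 [q1 [w1 S1]]]].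
  destruct (analytic_smooth p2 A2) as [r2 [Hr2 [q2 [w2 S2]]]].
  destruct (analytic_smooth p3 A3) as [r3 [Hr3 [q3 [w3 S3]]]].
  destruct (analytic_smooth p4 A4) as [r4 [Hr4 [q4 [w4 S4]]]].
  set (rho := Rmin (Rmin r1 r2) (Rmin r3 r4)).
  assert (Hrho : 0 < rho) by (apply Rmin_pos; apply Rmin_pos; auto).
  assert (R1 : rho <= r1) by (unfold rho; eapply Rle_trans; apply Rmin_l).
  assert (R2 : rho <= r2) by (unfold rho; eapply Rle_trans; [apply Rmin_l|apply Rmin_r]).
  assert (R3 : rho <= r3) by (unfold rho; eapply Rle_trans; [apply Rmin_r|apply Rmin_l]).
  assert (R4 : rho <= r4) by (unfold rho; eapply Rle_trans; apply Rmin_r).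
  apply (AR_structure u u1 u2 r a (Rabs a + 1) p1 p2 p3 p4 q1 q2 q3 q4 w1 w2 w3 w4 rho).
  all: first [ solve [auto] | solve [pose proof (Rabs_pos a); lra]
             | solve [apply (smooth2_mono _ _ _ r1); auto]
             | solve [apply (smooth2_mono _ _ _ r2); auto]
             | solve [apply (smooth2_mono _ _ _ r3); auto]
             | solve [apply (smooth2_mono _ _ _ r4); auto]
             | (exists e0; split; auto; intros x y Hx Hy; apply (HAR x y Hx Hy)) ].
Qed.

Lemma lc_shift c phi : c = 0 -> locally_const_at 0 phi -> locally_const_at c phi.
Proof. intros -> H; auto. Qed.

Lemma combine u u1 u2 r a p1 p2 p3 p4 q1 q2 q3 q4 :
  smooth2 u u1 u2 r -> 0 < r -> r <= 1 -> a <> 0 -> u 0 = a -> u1 0 = 1 / (2 * a) ->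
  (forall t, Rabs t < r -> Rabs (u t) <= Rabs a + 1) ->
  abelian_relation Xc Yc (fW u) (gW u) p1 p2 p3 p4 ->
  abelian_relation Xc Yc (fW u) (gW u) q1 q2 q3 q4 ->
  exists l m : R, (l <> 0 \/ m <> 0) /\
    trivial_relation Xc Yc (fW u) (gW u)
      (fun s => l * p1 s + m * q1 s) (fun s => l * p2 s + m * q2 s)
      (fun s => l * p3 s + m * q3 s) (fun s => l * p4 s + m * q4 s).
Proof.
  intros Hs Hr0 Hr Ha Hu0 Hv HB Hp Hq.
  destruct (AR_beta u u1 u2 r a p1 p2 p3 p4 Hs Hr0 Hr Ha Hu0 Hv HB Hp) as [bp [ep [Hep Hpp]]].
  destruct (AR_beta u u1 u2 r a q1 q2 q3 q4 Hs Hr0 Hr Ha Hu0 Hv HB Hq) as [bq [eq [Heq Hqq]]].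
  set (e := Rmin ep eq).
  assert (He : 0 < e) by (apply Rmin_pos; auto).
  assert (Hep' : e <= ep) by apply Rmin_l.
  assert (Heq' : e <= eq) by apply Rmin_r.
  assert (Key : forall l m, l * bp + m * bq = 0 ->
    trivial_relation Xc Yc (fW u) (gW u)
      (fun s => l * p1 s + m * q1 s) (fun s => l * p2 s + m * q2 s)
      (fun s => l * p3 s + m * q3 s) (fun s => l * p4 s + m * q4 s)).
  { intros l m Hlm.
    unfold trivial_relation. repeat split;
      [ change (locally_const_at 0 (fun s => l * p1 s + m * q1 s))
      | change (locally_const_at 0 (fun s => l * p2 s + m * q2 s))
      | apply lc_shift; [apply fW00|]
      | apply lc_shift; [apply gW00|] ];
      exists e; split; auto; intros t Ht; rewrite Rminus_0_r in Ht;
      destruct (Hpp t ltac:(lra)) as (P1 & P2 & P3 & P4);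
      destruct (Hqq t ltac:(lra)) as (Q1 & Q2 & Q3 & Q4).
    - rewrite P1, Q1. replace (l * (p1 0 + bp * (t ^ 3 / 3)) + m * (q1 0 + bq * (t ^ 3 / 3)))
        with (l * p1 0 + m * q1 0 + (l * bp + m * bq) * (t ^ 3 / 3)) by ring. rewrite Hlm. ring.
    - rewrite P2, Q2. replace (l * (p2 0 + bp * (2 * t)) + m * (q2 0 + bq * (2 * t)))
        with (l * p2 0 + m * q2 0 + (l * bp + m * bq) * (2 * t)) by ring. rewrite Hlm. ring.
    - rewrite P3, Q3. replace (l * (p3 0 + bp * (- t)) + m * (q3 0 + bq * (- t)))
        with (l * p3 0 + m * q3 0 + (l * bp + m * bq) * (- t)) by ring. rewrite Hlm. ring.
    - rewrite P4, Q4. replace (l * (p4 0 + bp * (- t)) + m * (q4 0 + bq * (- t)))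
        with (l * p4 0 + m * q4 0 + (l * bp + m * bq) * (- t)) by ring. rewrite Hlm. ring. }
  destruct (Req_dec bp 0) as [Hbp|Hbp]; destruct (Req_dec bq 0) as [Hbq|Hbq].
  - exists 1, 0. split; [left; lra|]. apply Key. rewrite Hbp, Hbq. ring.
  - exists bq, (- bp). split; [left; auto|]. apply Key. ring.
  - exists bq, (- bp). split; [right; apply Ropp_neq_0_compat; auto|]. apply Key. ring.
  - exists bq, (- bp). split; [left; auto|]. apply Key. ring.
Qed.

Theorem mainTheorem5 (a : R) (ha : a <> 0) :
  (exists u : R -> R, analytic_at 0 u /\ u 0 = a /\ solves_ode u) /\
  (forall u : R -> R, analytic_at 0 u -> u 0 = a -> solves_ode u ->
     (exists e : R, 0 < e /\ forall x y, Rabs x < e -> Rabs y < e ->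
        px (fW u) x y * py (gW u) x y + px (gW u) x y * py (fW u) x y = 0) /\
     blaschke_curvature Xc Yc (fW u) 0 0 <> 0 /\
     ~ hexagonal_at0 Xc Yc (fW u) /\
     ~ hexagonal_at0 Xc Yc (gW u) /\
     ~ hexagonal_at0 Xc (fW u) (gW u) /\
     ~ hexagonal_at0 Yc (fW u) (gW u) /\
     abelian_relation Xc Yc (fW u) (gW u)
       (fun s => s ^ 3 / 3) (fun s => 2 * s) (fun s => - s) (fun s => - s) /\
     ~ trivial_relation Xc Yc (fW u) (gW u)
       (fun s => s ^ 3 / 3) (fun s => 2 * s) (fun s => - s) (fun s => - s) /\
     rank_exactly_one Xc Yc (fW u) (gW u)).
Proof.
  split; [apply exists_sol; auto|].
  intros u Hua Hu0 [r2 [Hr2 Hode]].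
  destruct (analytic_smooth u Hua) as [r1 [Hr1 [u1 [u2 Hs1]]]].
  assert (H0r1 : Rabs 0 < r1) by (rewrite Rabs_R0; auto).
  assert (Hv1 : a * u1 0 = 1 / 2).
  { pose proof (Hode 0 ltac:(rewrite Rabs_R0; auto)) as H.
    rewrite (is_derive_unique _ _ _ (proj1 (Hs1 0 H0r1))) in H. rewrite Hu0 in H. lra. }
  assert (Hv : u1 0 = 1 / (2 * a)).
  { apply (Rmult_eq_reg_l a); auto. rewrite Hv1. field. auto. }
  destruct (cont_bound u u1 r1 a (fun t Ht => proj1 (Hs1 t Ht)) Hr1 Hu0) as [du [Hdu HBu]].
  assert (Hpa : 0 < Rabs a) by (apply Rabs_pos_lt; auto).
  set (r := Rmin (Rmin r1 r2) (Rmin 1 (Rmin (Rabs a) du))).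
  assert (Hr0 : 0 < r) by (repeat apply Rmin_pos; auto; lra).
  assert (Rr1 : r <= r1) by (unfold r; eapply Rle_trans; apply Rmin_l).
  assert (Rr2 : r <= r2) by (unfold r; eapply Rle_trans; [apply Rmin_l|apply Rmin_r]).
  assert (Rr3 : r <= 1) by (unfold r; eapply Rle_trans; [apply Rmin_r|apply Rmin_l]).
  assert (Rr4 : r <= Rabs a) by (unfold r; eapply Rle_trans; [apply Rmin_r|];
                                 eapply Rle_trans; [apply Rmin_r|apply Rmin_l]).
  assert (Rr5 : r <= du) by (unfold r; eapply Rle_trans; [apply Rmin_r|];
                                 eapply Rle_trans; [apply Rmin_r|apply Rmin_r]).
  assert (Hs : smooth2 u u1 u2 r) by (apply (smooth2_mono _ _ _ r1); auto).
  assert (HodeR : forall t, Rabs t < r -> t * (u1 t) ^ 2 + u t * u1 t - 1 / 2 = 0).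
  { intros t Ht. pose proof (Hode t ltac:(lra)) as H.
    rewrite (is_derive_unique _ _ _ (proj1 (Hs t Ht))) in H. exact H. }
  assert (HB : forall t, Rabs t < r -> Rabs (u t) <= Rabs a + 1) by (intros t Ht; apply HBu; lra).
  assert (C1 : blaschke_curvature Xc Yc (fW u) 0 0 = 1 / a ^ 2)
    by (apply (curv_web1 u u1 u2 r a); auto).
  assert (C2 : blaschke_curvature Xc Yc (gW u) 0 0 = 1 / (- a) ^ 2).
  { rewrite gW_opp. apply (curv_web1 _ (fun t => - u1 t) (fun t => - u2 t) r (- a)); auto.
    - apply smooth2_opp; auto.
    - apply Ropp_neq_0_compat; auto.
    - rewrite Hu0; auto.
    - lra. }
  assert (C3 : blaschke_curvature Xc (fW u) (gW u) 0 0 = 1 / a ^ 2)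
    by (apply (curv_web3 u u1 u2 r a); auto).
  assert (C4 : blaschke_curvature Yc (fW u) (gW u) 0 0 = 1 / a ^ 2)
    by (apply (curv_web4 u u1 u2 r a); auto).
  assert (Hnz : 1 / a ^ 2 <> 0) by (apply inv_a2_nz; auto).
  assert (Hnz' : 1 / (- a) ^ 2 <> 0) by (apply inv_a2_nz; apply Ropp_neq_0_compat; auto).
  assert (AR0 : abelian_relation Xc Yc (fW u) (gW u)
       (fun s => s ^ 3 / 3) (fun s => 2 * s) (fun s => - s) (fun s => - s)).
  { unfold abelian_relation. split; [|split; [|split; [|split]]].
    - change (analytic_at 0 (fun s => s ^ 3 / 3)).
      apply (analytic_ext _ (fun s => (1 / 3) * s ^ 3)); [intros; field|apply analytic_monom].
    - change (analytic_at 0 (fun s => 2 * s)).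
      apply (analytic_ext _ (fun s => 2 * s ^ 1)); [intros; ring|apply analytic_monom].
    - rewrite fW00.
      apply (analytic_ext _ (fun s => (-1) * s ^ 1)); [intros; ring|apply analytic_monom].
    - rewrite gW00.
      apply (analytic_ext _ (fun s => (-1) * s ^ 1)); [intros; ring|apply analytic_monom].
    - exists 1. split; [lra|]. intros x y _ _. unfold Xc, Yc, fW, gW. field. }
  assert (NT0 : ~ trivial_relation Xc Yc (fW u) (gW u)
       (fun s => s ^ 3 / 3) (fun s => 2 * s) (fun s => - s) (fun s => - s)).
  { intros [_ [[e [He H]] _]]. change (Yc 0 0) with 0 in H.
    specialize (H (e / 2) ltac:(rewrite Rminus_0_r, Rabs_right; lra)). lra. }
  split; [|split; [|split; [|split; [|split; [|split; [|split; [|split]]]]]]].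
  - exists r. split; auto. intros x y Hx Hy.
    apply (cross_ratio u u1 u2 r); auto. apply HodeR. apply sq_lt; auto.
  - rewrite C1; auto.
  - apply not_hex. rewrite C1; auto.
  - apply not_hex. rewrite C2; auto.
  - apply not_hex. rewrite C3; auto.
  - apply not_hex. rewrite C4; auto.
  - exact AR0.
  - exact NT0.
  - split.
    + exists (fun s => s ^ 3 / 3), (fun s => 2 * s), (fun s => - s), (fun s => - s). split; auto.
    + intros p1 p2 p3 p4 q1 q2 q3 q4 Hp Hq.
      apply (combine u u1 u2 r a); auto.
Qed.
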